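(* Let $\mathcal{F}^*$ be one of $\mathcal{F}^c,\mathcal{F}^{ev},\mathcal{F}^o$, let $\kappa_0=\kappa(H_0,\lambda_0,\alpha_0)$ and $\kappa_1=\kappa(H_1,\lambda_1,\alpha_1)$ be nondegenerate quadratic functions in $\mathcal{F}^*$, and let $\theta:\mathrm{Cok}(\hat\lambda_0)\to\mathrm{Cok}(\hat\lambda_1)$ be an isometry of the induced quadratic linking families. Let $H=\{(x_0,x_1)\in H_0^*\oplus H_1^*:\theta([x_0])=[x_1]\}$ and define $\lambda:H\times H\to\mathbb{Q}$ by $\lambda((x_0,x_1),(y_0,y_1))=\lambda_0^{-1}(x_0,y_0)-\lambda_1^{-1}(x_1,y_1)$. Then: 1. $\lambda$ is a nonsingular integral symmetric bilinear form on the free abelian group $H$; 2. the map $H_0\oplus H_1\to H$, $(v_0,v_1)\mapsto(\hat\lambda_0(v_0),-\hat\lambda_1(v_1))$, is an isometric embedding of $\lambda_0\oplus(-\lambda_1)$ into $\lambda$; 3. $(\alpha_0,\alpha_1)\in H$; 4. with $\alpha:=\hat\lambda((\alpha_0,\alpha_1))$, the quadratic function $\kappa_0\cup_\theta\kappa_1^-:=\kappa(H,\lambda,\alpha)$ belongs to $\mathcal{F}^*$; 5. the map in 2 is an isometric embedding $\kappa_0\oplus\kappa_1^-\to\kappa_0\cup_\theta\kappa_1^-$.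
   Context: A quadratic function $\kappa(H,\lambda,\alpha)$: $H$ finitely generated free abelian, $\lambda$ symmetric bilinear into $\mathbb{Z}$, $\alpha\in H^*=\mathrm{Hom}(H,\mathbb{Z})$, $\kappa(v)=\lambda(v,v)+\alpha(v)$, adjoint $\hat\lambda:H\to H^*$; nondegenerate if $\hat\lambda$ injective, nonsingular if bijective; $\kappa^-=\kappa(H,-\lambda,\alpha)$. Families: $\mathcal{F}^c$ characteristic ($\lambda(v,v)+\alpha(v)$ even $\forall v$); $\mathcal{F}^{ev}$ with $\lambda$ even; $\mathcal{F}^o$ with $\lambda$ even and $\alpha=0$. For nondegenerate $\kappa_i$: $[x]$ denotes the class of $x\in H_i^*$ in the finite group $\mathrm{Cok}\,\hat\lambda_i$; $\lambda_i^{-1}(x,y)=y(v)/r$ where $rx=\hat\lambda_i(v)$, $r\ne0$; $q^{ev}(\kappa_i)([x])=\frac12\lambda_i^{-1}(x,x)\bmod\mathbb{Z}$ (used for $\mathcal{F}^{ev},\mathcal{F}^o$) and $q^c(\kappa_i)([x])=\frac12(\lambda_i^{-1}(x,x)+\lambda_i^{-1}(x,\alpha_i))\bmod\mathbb{Z}$ (for $\mathcal{F}^c$). An isometry of the induced quadratic linking families is a group isomorphism $\theta$ with $\theta([\alpha_0])=[\alpha_1]$ and $q^*(\kappa_1)\circ\theta=q^*(\kappa_0)$. Isometric embedding: injective homomorphism preserving the (quadratic or bilinear) forms. *)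

(* Defs.v *)
From HB Require Import structures.
From mathcomp Require Import all_boot all_order all_algebra.
Set Implicit Arguments. Unset Strict Implicit. Unset Printing Implicit Defensive.
Import Order.TTheory GRing.Theory Num.Theory.
Local Open Scope ring_scope.

(* A f.g. free abelian group H is Z^n ('rV[int]_n);
   H^* = Hom(H,Z) is identified with 'rV[int]_n via the dual basis,
   x(v) = (v *m x^T) 0 0.  lambda is given by its Gram matrix L,
   lambda(v,w) = (v *m L *m w^T) 0 0, adjoint  v |-> v *m L. *)

Inductive qfamily := Fc | Fev | Fo.

Definition bil n (L : 'M[int]_n) (v w : 'rV[int]_n) : int := (v *m L *m w^T) 0 0.
Definition app n (a : 'rV[int]_n) (v : 'rV[int]_n) : int := (v *m a^T) 0 0.

Definition nondeg n (L : 'M[int]_n) : Prop := forall v : 'rV[int]_n, v *m L = 0 -> v = 0.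

Definition in_family (F : qfamily) n (L : 'M[int]_n) (a : 'rV[int]_n) : Prop :=
  match F with
  | Fc => forall v, (2 %| bil L v v + app a v)%Z
  | Fev => forall v, (2 %| bil L v v)%Z
  | Fo => (forall v, (2 %| bil L v v)%Z) /\ a = 0
  end.

Definition cok_eq n (L : 'M[int]_n) (x y : 'rV[int]_n) : Prop :=
  exists v : 'rV[int]_n, x - y = v *m L.

Definition ratmx m n (A : 'M[int]_(m, n)) : 'M[rat]_(m, n) := map_mx (fun z : int => z%:~R) A.

(* lambda^{-1}(x, y) = y(v)/r where r x = adjoint(v); computed as x L^{-1} y^T *)
Definition linv n (L : 'M[int]_n) (x y : 'rV[int]_n) : rat :=
  (ratmx x *m invmx (ratmx L) *m (ratmx y)^T) 0 0.

Definition eqmodZ (p q : rat) : Prop := exists z : int, p - q = z%:~R.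

(* value in Q (to be read mod Z) of the quadratic linking qfamily q^* *)
Definition qlink (F : qfamily) n (L : 'M[int]_n) (a : 'rV[int]_n) (x : 'rV[int]_n) : rat :=
  match F with
  | Fc => (linv L x x + linv L x a) / 2
  | _ => linv L x x / 2
  end.

(* theta : Cok L0 -> Cok L1, given on representatives: a well-defined map of classes
   which is a group isomorphism of the cokernels, sends [a0] to [a1] and satisfies
   q^*(kappa1) o theta = q^*(kappa0). *)
Definition qlf_isometry (F : qfamily) n0 n1 (L0 : 'M[int]_n0) (a0 : 'rV[int]_n0)
    (L1 : 'M[int]_n1) (a1 : 'rV[int]_n1) (theta : 'rV[int]_n0 -> 'rV[int]_n1) : Prop :=
  [/\ (forall x x', cok_eq L0 x x' -> cok_eq L1 (theta x) (theta x')),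
      (forall x y, cok_eq L1 (theta (x + y)) (theta x + theta y)),
      (forall x y, cok_eq L1 (theta x) (theta y) -> cok_eq L0 x y),
      (forall y, exists x, cok_eq L1 (theta x) y) &
      (cok_eq L1 (theta a0) a1 /\
       forall x, eqmodZ (qlink F L1 a1 (theta x)) (qlink F L0 a0 x))].

Definition pairT n0 n1 := ('rV[int]_n0 * 'rV[int]_n1)%type.
Definition padd n0 n1 (h k : pairT n0 n1) : pairT n0 n1 := (h.1 + k.1, h.2 + k.2).

Definition inH n0 n1 (L1 : 'M[int]_n1) (theta : 'rV[int]_n0 -> 'rV[int]_n1)
  (h : pairT n0 n1) : Prop := cok_eq L1 (theta h.1) h.2.

Definition lamH n0 n1 (L0 : 'M[int]_n0) (L1 : 'M[int]_n1) (h k : pairT n0 n1) : rat :=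
  linv L0 h.1 k.1 - linv L1 h.2 k.2.

Definition free_fg n0 n1 (H : pairT n0 n1 -> Prop) : Prop :=
  exists m (B0 : 'M[int]_(m, n0)) (B1 : 'M[int]_(m, n1)),
    forall h, H h <-> exists! u : 'rV[int]_m, h = (u *m B0, u *m B1).

Definition symmetric_on n0 n1 (H : pairT n0 n1 -> Prop) (lam : pairT n0 n1 -> pairT n0 n1 -> rat) :=
  forall h k, H h -> H k -> lam h k = lam k h.

Definition bilinear_on n0 n1 (H : pairT n0 n1 -> Prop) (lam : pairT n0 n1 -> pairT n0 n1 -> rat) :=
  forall h h' k, H h -> H h' -> H k ->
    lam (padd h h') k = lam h k + lam h' k /\ lam k (padd h h') = lam k h + lam k h'.

Definition integral_on n0 n1 (H : pairT n0 n1 -> Prop) (lam : pairT n0 n1 -> pairT n0 n1 -> rat) :=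
  forall h k, H h -> H k -> exists z : int, lam h k = z%:~R.

(* the adjoint H -> Hom(H, Z), h |-> lam(h, .), is bijective *)
Definition nonsingular_on n0 n1 (H : pairT n0 n1 -> Prop) (lam : pairT n0 n1 -> pairT n0 n1 -> rat) :=
  (forall h, H h -> (forall k, H k -> lam h k = 0) -> h = (0, 0)) /\
  (forall f : pairT n0 n1 -> int,
     (forall h k, H h -> H k -> f (padd h k) = f h + f k) ->
     exists h, H h /\ forall k, H k -> (f k)%:~R = lam h k).

Definition evenQ (x : rat) : Prop := exists z : int, x = (2 * z)%:~R.

(* kappa(H, lam, alpha) with alpha = adjoint(a) lies in the qfamily F *)
Definition fam_on (F : qfamily) n0 n1 (H : pairT n0 n1 -> Prop)
    (lam : pairT n0 n1 -> pairT n0 n1 -> rat) (a : pairT n0 n1) : Prop :=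
  match F with
  | Fc => forall h, H h -> evenQ (lam h h + lam a h)
  | Fev => forall h, H h -> evenQ (lam h h)
  | Fo => (forall h, H h -> evenQ (lam h h)) /\ (forall h, H h -> lam a h = 0)
  end.

Definition jmap n0 n1 (L0 : 'M[int]_n0) (L1 : 'M[int]_n1) (v : pairT n0 n1) : pairT n0 n1 :=
  (v.1 *m L0, - (v.2 *m L1)).

(* Main.v *)
Require Import Defs.
From HB Require Import structures.
From mathcomp Require Import all_boot all_order all_algebra.
From mathcomp Require Import ring.
From Stdlib Require Import Classical.
Set Implicit Arguments. Unset Strict Implicit. Unset Printing Implicit Defensive.
Import Order.TTheory GRing.Theory Num.Theory.
Local Open Scope ring_scope.

Definition isZ (q : rat) : Prop := exists z : int, q = z%:~R.

Lemma isZ_int (z : int) : isZ z%:~R. Proof. by exists z. Qed.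
Lemma isZD p q : isZ p -> isZ q -> isZ (p + q).
Proof. by move=> [a ->] [b ->]; exists (a + b); rewrite intrD. Qed.
Lemma isZN p : isZ p -> isZ (- p).
Proof. by move=> [a ->]; exists (- a); rewrite intrN. Qed.
Lemma isZB p q : isZ p -> isZ q -> isZ (p - q).
Proof. by move=> hp hq; apply: isZD=> //; apply: isZN. Qed.
Lemma isZM p q : isZ p -> isZ q -> isZ (p * q).
Proof. by move=> [a ->] [b ->]; exists (a * b); rewrite intrM. Qed.
Lemma isZ0 : isZ 0. Proof. by exists 0. Qed.

Lemma eqmodZ_isZ p q : eqmodZ p q <-> isZ (p - q). Proof. by []. Qed.

Definition dot n (x y : 'rV[int]_n) : int := (x *m y^T) 0 0.

Lemma ratmxM m p q (A : 'M[int]_(m,p)) (B : 'M_(p,q)) : ratmx (A *m B) = ratmx A *m ratmx B.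
Proof. by rewrite /ratmx map_mxM. Qed.
Lemma ratmxD m p (A B : 'M[int]_(m,p)) : ratmx (A + B) = ratmx A + ratmx B.
Proof. by rewrite /ratmx map_mxD. Qed.
Lemma ratmxN m p (A : 'M[int]_(m,p)) : ratmx (- A) = - ratmx A.
Proof. by rewrite /ratmx map_mxN. Qed.
Lemma ratmxT m p (A : 'M[int]_(m,p)) : ratmx (A^T) = (ratmx A)^T.
Proof. by rewrite /ratmx map_trmx. Qed.
Lemma ratmxZ m p (a : int) (A : 'M[int]_(m,p)) : ratmx (a *: A) = a%:~R *: ratmx A.
Proof. by rewrite /ratmx map_mxZ. Qed.
Lemma ratmx0 m p : ratmx (0 : 'M[int]_(m,p)) = 0.
Proof. by rewrite /ratmx map_mx0. Qed.
Lemma ratmxE m p (A : 'M[int]_(m,p)) i j : ratmx A i j = (A i j)%:~R.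
Proof. by rewrite /ratmx mxE. Qed.
Lemma ratmx_inj m p (A B : 'M[int]_(m,p)) : ratmx A = ratmx B -> A = B.
Proof. by move=> h; apply/matrixP=> i j; apply: (@intr_inj rat); rewrite -!ratmxE h. Qed.

Lemma ratdot n (x y : 'rV[int]_n) : (ratmx x *m (ratmx y)^T) 0 0 = (dot x y)%:~R.
Proof. by rewrite -ratmxT -ratmxM ratmxE. Qed.

Lemma dotC n (x y : 'rV[int]_n) : dot x y = dot y x.
Proof. by rewrite /dot -{1}[x *m y^T]trmxK trmx_mul trmxK [in LHS]mxE. Qed.
Section Lin.
Variables (n : nat) (L : 'M[int]_n).
Hypotheses (LT : L^T = L) (LU : ratmx L \in unitmx).

Let Li := invmx (ratmx L).

Lemma LiT : Li^T = Li.
Proof. by rewrite /Li trmx_inv -ratmxT LT. Qed.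

Lemma linv_sym x y : linv L x y = linv L y x.
Proof.
rewrite /linv -/Li; transitivity (((ratmx x *m Li *m (ratmx y)^T)^T) 0 0).
  by rewrite [RHS]mxE.
by rewrite !trmx_mul trmxK LiT mulmxA.
Qed.

Lemma linvDl x x' y : linv L (x + x') y = linv L x y + linv L x' y.
Proof. by rewrite /linv ratmxD !mulmxDl mxE. Qed.
Lemma linvNl x y : linv L (- x) y = - linv L x y.
Proof. by rewrite /linv ratmxN !mulNmx mxE. Qed.
Lemma linvBl x x' y : linv L (x - x') y = linv L x y - linv L x' y.
Proof. by rewrite linvDl linvNl. Qed.
Lemma linvDr x y y' : linv L x (y + y') = linv L x y + linv L x y'.
Proof. by rewrite linv_sym linvDl !(linv_sym y) (linv_sym y'). Qed.
Lemma linvNr x y : linv L x (- y) = - linv L x y.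
Proof. by rewrite linv_sym linvNl linv_sym. Qed.
Lemma linvBr x y y' : linv L x (y - y') = linv L x y - linv L x y'.
Proof. by rewrite linvDr linvNr. Qed.
Lemma linv0l y : linv L 0 y = 0.
Proof. by rewrite /linv ratmx0 !mul0mx mxE. Qed.
Lemma linvMnr x y k : linv L x (y *+ k) = linv L x y *+ k.
Proof.
elim: k => [|k IH]; first by rewrite !mulr0n linv_sym linv0l.
by rewrite !mulrS linvDr IH.
Qed.

Lemma linv_mull v y : linv L (v *m L) y = (dot v y)%:~R.
Proof. by rewrite /linv ratmxM mulmxK // ratdot. Qed.
Lemma linv_mulr x v : linv L x (v *m L) = (dot v x)%:~R.
Proof. by rewrite linv_sym linv_mull. Qed.

Lemma linv_mul2 v w : linv L (v *m L) (w *m L) = (bil L v w)%:~R.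
Proof. by rewrite linv_mull /bil /dot trmx_mul LT mulmxA. Qed.

Lemma cok_refl x : cok_eq L x x.
Proof. by exists 0; rewrite subrr mul0mx. Qed.
Lemma cok_sym x y : cok_eq L x y -> cok_eq L y x.
Proof. by move=> [v hv]; exists (- v); rewrite mulNmx -hv opprB. Qed.
Lemma cok_trans x y z : cok_eq L x y -> cok_eq L y z -> cok_eq L x z.
Proof.
by move=> [v hv] [w hw]; exists (v + w); rewrite mulmxDl -hv -hw addrA subrK.
Qed.
Lemma cok_add x x' y y' : cok_eq L x x' -> cok_eq L y y' -> cok_eq L (x + y) (x' + y').
Proof.
move=> [v hv] [w hw]; exists (v + w); rewrite mulmxDl -hv -hw.
by rewrite opprD addrACA.
Qed.
Lemma cok_opp x x' : cok_eq L x x' -> cok_eq L (- x) (- x').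
Proof. by move=> [v hv]; exists (- v); rewrite mulNmx -hv opprD. Qed.
Lemma cok_mul v : cok_eq L (v *m L) 0.
Proof. by exists v; rewrite subr0. Qed.
Lemma cok_sub x y : cok_eq L x y -> cok_eq L (x - y) 0.
Proof. by move=> [v hv]; exists v; rewrite subr0. Qed.
Lemma cok_sub' x y : cok_eq L (x - y) 0 -> cok_eq L x y.
Proof. by move=> [v hv]; exists v; rewrite -hv subr0. Qed.

Lemma linv_cokl x x' y : cok_eq L x x' -> isZ (linv L x y - linv L x' y).
Proof. by move=> [v hv]; rewrite -linvBl hv linv_mull; apply: isZ_int. Qed.
Lemma linv_cokr x y y' : cok_eq L y y' -> isZ (linv L x y - linv L x y').
Proof. by move=> h; rewrite !(linv_sym x); apply: linv_cokl. Qed.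

Lemma qlink_cok F a x x' : in_family F L a -> cok_eq L x x' ->
  isZ (qlink F L a x - qlink F L a x').
Proof.
move=> hF [v hv]; have -> : x = x' + v *m L by rewrite -hv addrC subrK.
have E : linv L (x' + v *m L) (x' + v *m L) =
   linv L x' x' + 2%:R * (dot v x')%:~R + (bil L v v)%:~R.
  rewrite linvDl !linvDr linv_mul2 linv_mull linv_mulr; ring.
case: F hF => [hF|hF|[hF _]]; rewrite /qlink.
- rewrite E linvDl linv_mull.
  have [z hz] : isZ ((bil L v v + app a v)%:~R / 2%:R).
    by have /dvdzP [k ->] := hF v; exists k; rewrite intrM mulfK.
  exists (dot v x' + z); rewrite intrD -hz intrD /app /dot; by field.
- rewrite E.
  have [z hz] : isZ ((bil L v v)%:~R / 2%:R).
    by have /dvdzP [k ->] := hF v; exists k; rewrite intrM mulfK.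
  exists (dot v x' + z); rewrite intrD -hz; by field.
- rewrite E.
  have [z hz] : isZ ((bil L v v)%:~R / 2%:R).
    by have /dvdzP [k ->] := hF v; exists k; rewrite intrM mulfK.
  exists (dot v x' + z); rewrite intrD -hz; by field.
Qed.

End Lin.

Lemma nondeg_unit n (L : 'M[int]_n) : nondeg L -> ratmx L \in unitmx.
Proof.
move=> hL; rewrite unitmxE unitfE; apply/negP => /det0P [v v0 hv].
pose d : int := \prod_i denq (v 0 i).
pose w : 'rV[int]_n := \row_i (numq (v 0 i) * \prod_(j | j != i) denq (v 0 j)).
have hw : ratmx w = d%:~R *: v.
  apply/matrixP => i j; rewrite ratmxE !mxE (ord1 i) /d [in RHS](bigD1 j) //= !intrM.
  rewrite -[X in _ = _ * X](divq_num_den (v 0 j)).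
  by field; rewrite intr_eq0 denq_neq0.
have hd : d != 0 by apply/prodf_neq0 => i _; apply: denq_neq0.
have hwL : w *m L = 0.
  apply: ratmx_inj; rewrite ratmxM hw -scalemxAl hv scaler0 ratmx0 //.
move: hw; rewrite (hL _ hwL) ratmx0 => /esym/eqP; rewrite scaler_eq0.
by rewrite intr_eq0 (negbTE hd) (negbTE v0).
Qed.

Lemma det_neq0 n (L : 'M[int]_n) : ratmx L \in unitmx -> \det L != 0.
Proof. by rewrite unitmxE unitfE /ratmx det_map_mx intr_eq0. Qed.

Lemma adj_mul n (L : 'M[int]_n) (x : 'rV[int]_n) : x *m \adj L *m L = \det L *: x.
Proof. by rewrite -mulmxA mul_adj_mx mul_mx_scalar. Qed.

Lemma img_of_int n (L : 'M[int]_n) w : ratmx L \in unitmx ->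
  (forall z, isZ (linv L w z)) -> exists u, w = u *m L.
Proof.
move=> LU hz; pose M := ratmx w *m invmx (ratmx L).
have hM i : isZ (M 0 i).
  have := hz (delta_mx 0 i); rewrite /linv -ratmxT trmx_delta /ratmx map_delta_mx.
  by rewrite -colE mxE.
exists (\row_i numq (M 0 i)); apply: ratmx_inj; rewrite ratmxM.
have -> : ratmx (\row_i numq (M 0 i)) = M.
  apply/matrixP => i j; rewrite (ord1 i) ratmxE mxE.
  by have [z ->] := hM j; rewrite numq_int.
by rewrite /M mulmxKV.
Qed.

Lemma ex_min_nat (P : nat -> Prop) n : P n -> exists m, P m /\ forall k, P k -> (m <= k)%N.
Proof.
move=> hPn; suff: forall b m, (m <= b)%N -> P m ->
   exists m, P m /\ forall k, P k -> (m <= k)%N by move/(_ n n (leqnn n) hPn).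
elim=> [|b IH] m hm hP.
  exists m; split=> // k _; move: hm; rewrite leqn0 => /eqP ->; done.
case: (classic (exists k, P k /\ (k < m)%N)) => [[k [hk hkm]]|nk].
  by apply: (IH k) => //; rewrite -ltnS (leq_trans hkm hm).
exists m; split=> // k hk; rewrite leqNgt; apply/negP => hkm; apply: nk; by exists k.
Qed.

Section Subgroup.
Variables (N : nat) (K : 'rV[int]_N -> Prop).
Hypotheses (K0 : K 0) (KB : forall x y, K x -> K y -> K (x - y)).

Lemma KN x : K x -> K (- x).
Proof. by move=> h; rewrite -sub0r; apply: KB. Qed.
Lemma KD x y : K x -> K y -> K (x + y).
Proof. by move=> hx hy; rewrite -[y]opprK; apply: KB => //; apply: KN. Qed.
Lemma KMn x k : K x -> K (x *+ k).
Proof. by move=> hx; elim: k => [|k IH]; rewrite ?mulr0n // mulrS; apply: KD. Qed.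
Lemma KZ (z : int) x : K x -> K (z *: x).
Proof.
move=> hx; case: z => k.
  by rewrite -natz scaler_nat; apply: KMn.
by rewrite NegzE scaleNr -natz scaler_nat; apply/KN/KMn.
Qed.
End Subgroup.

Lemma subgroup_basis_k N k : forall (K : 'rV[int]_N -> Prop),
  K 0 -> (forall x y, K x -> K y -> K (x - y)) ->
  (forall x, K x -> forall i : 'I_N, (k <= i)%N -> x 0 i = 0) ->
  exists m (B : 'M[int]_(m, N)), (forall x, K x <-> exists u, x = u *m B) /\
     (forall u : 'rV[int]_m, u *m B = 0 -> u = 0).
Proof.
elim: k => [|k IH] K K0 KB hsupp.
  exists 0%N, 0; split; last by move=> u _; apply: thinmx0.
  move=> x; split.
    move=> hx; exists 0; rewrite mulmx0; apply/rowP => i; rewrite mxE; exact: hsupp.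
  by move=> [u ->]; rewrite mulmx0.
case: (ltnP k N) => hk; last first.
  apply: IH => // x hx i hi; exfalso; move: (ltn_ord i); rewrite ltnNge.
  by rewrite (leq_trans hk hi).
pose ik := Ordinal hk.
have KZl := KZ K0 KB; have KDl := KD K0 KB; have KNl := KN K0 KB.
case: (classic (forall x, K x -> x 0 ik = 0)) => [hz|nz].
  apply: IH => // x hx i; rewrite leq_eqVlt => /orP [/eqP ei|hi]; last exact: (hsupp x hx i hi).
  have -> : i = ik by apply/val_inj; rewrite /= ei.
  by apply: hz.
have [x [hx hxk]] : exists x, K x /\ x 0 ik != 0.
  apply: NNPP => hn; apply: nz => x hx; apply: NNPP => hxn; apply: hn.
  by exists x; split=> //; apply/eqP.
pose Pn d := (0 < d)%N /\ exists w, K w /\ w 0 ik = d%:Z.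
have Px : Pn (absz (x 0 ik)).
  split; first by rewrite absz_gt0.
  have [h|h] := lerP 0 (x 0 ik).
    by exists x; split=> //; rewrite gez0_abs.
  by exists (- x); split; [apply: KNl | rewrite mxE ltz0_abs].
have [d [[d0 [w [hw hwk]]] dmin]] := ex_min_nat Px.
pose K' x := K x /\ x 0 ik = 0.
have [m [B [hB hBi]]] : exists m (B : 'M[int]_(m, N)), (forall x, K' x <-> exists u, x = u *m B) /\
     (forall u : 'rV[int]_m, u *m B = 0 -> u = 0).
  apply: IH.
  - by split=> //; rewrite mxE.
  - by move=> y z [hy hy0] [hz hz0]; split; [apply: KB | rewrite !mxE hy0 hz0 subrr].
  - move=> y [hy hy0] i; rewrite leq_eqVlt => /orP [/eqP ei|hi]; last exact: (hsupp y hy i hi).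
    by have -> : i = ik by apply/val_inj; rewrite /= ei.
have dec (u : 'rV[int]_(m + 1)) : u *m col_mx B w = lsubmx u *m B + (rsubmx u 0 0) *: w.
  by rewrite -{1}(hsubmxK u) mul_row_col {1}(mx11_scalar (rsubmx u)) mul_scalar_mx.
have hBK l : K' (l *m B) by apply/hB; exists l.
exists (m + 1)%N, (col_mx B w); split.
  move=> y; split; last first.
    move=> [u ->]; rewrite dec; apply: KDl => //; first by case: (hBK (lsubmx u)).
    by apply: KZl.
  move=> hy; pose q := divz (y 0 ik) d%:Z.
  have hr : modz (y 0 ik) d%:Z = 0.
    have dpos : 0 < d%:Z by rewrite ltz_nat.
    have dz : d%:Z != 0 by rewrite gt_eqF.
    have r0 := modz_ge0 (y 0 ik) dz.
    have rd := ltz_pmod (y 0 ik) dpos.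
    apply: NNPP => rn.
    have : Pn (absz (modz (y 0 ik) d%:Z)).
      split; first by rewrite absz_gt0; apply/eqP.
      exists (y - q *: w); split; first by apply: KB => //; apply: KZl.
      rewrite !mxE hwk gez0_abs // {1}(divz_eq (y 0 ik) d%:Z) /q.
    move=> /dmin; rewrite leqNgt; move/negP; apply.
    by rewrite -ltz_nat gez0_abs.
  have [u hu] : exists u, y - q *: w = u *m B.
    apply/hB; split; first by apply: KB => //; apply: KZl.
    rewrite !mxE hwk {1}(divz_eq (y 0 ik) d%:Z) hr addr0 /q.
    by rewrite mulrC subrr.
  exists (row_mx u q%:M); rewrite mul_row_col mul_scalar_mx -hu subrK //.
move=> u hu; move: (hu); rewrite dec => h0.
have [_ hl0] := hBK (lsubmx u).
have hc : rsubmx u 0 0 = 0.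
  have e : lsubmx u *m B = - (rsubmx u 0 0 *: w) by apply/eqP; rewrite -addr_eq0 h0.
  move: hl0; rewrite e !mxE hwk => /eqP; rewrite oppr_eq0 mulf_eq0 => /orP [/eqP //|]; rewrite eqz_nat => /eqP d00.
  by move: d0; rewrite d00.
move: h0; rewrite hc scale0r addr0 => /hBi hl.
rewrite -(hsubmxK u) hl (mx11_scalar (rsubmx u)) hc.
by rewrite (_ : (0 : int)%:M = 0) ?row_mx0 //; apply/matrixP => i j; rewrite !mxE mul0rn.
Qed.

Lemma subgroup_basis N (K : 'rV[int]_N -> Prop) :
  K 0 -> (forall x y, K x -> K y -> K (x - y)) ->
  exists m (B : 'M[int]_(m, N)), (forall x, K x <-> exists u, x = u *m B) /\
     (forall u : 'rV[int]_m, u *m B = 0 -> u = 0).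
Proof.
move=> K0 KB; apply: (@subgroup_basis_k N N) => // x _ i hi.
by exfalso; move: (ltn_ord i); rewrite ltnNge hi.
Qed.

Lemma dot_delta n (i : 'I_n) (x : 'rV[int]_n) : dot (delta_mx 0 i) x = x 0 i.
Proof. by rewrite /dot -rowE !mxE. Qed.

Lemma additive_dot n (g : 'rV[int]_n -> int) :
  (forall x y, g (x + y) = g x + g y) ->
  forall v, g v = dot v (\row_i g (delta_mx 0 i)).
Proof.
move=> gD.
have g0 : g 0 = 0 by apply: (addrI (g 0)); rewrite -gD !addr0.
have gN x : g (- x) = - g x by apply/eqP; rewrite -addr_eq0 -gD addNr g0.
have gMn x k : g (x *+ k) = g x *+ k.
  by elim: k => [|k IH]; rewrite ?mulr0n // !mulrS gD IH.
have gZ (z : int) x : g (z *: x) = z * g x.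
  case: z => k; first by rewrite -natz scaler_nat gMn mulr_natl.
  by rewrite NegzE scaleNr gN -natz scaler_nat gMn mulNr mulr_natl.
move=> v; rewrite {1}(row_sum_delta v) (big_morph g gD g0) /dot mxE.
by apply: eq_bigr => j _; rewrite gZ !mxE.
Qed.

Lemma polar F n (L : 'M[int]_n) (a : 'rV[int]_n) : L^T = L -> ratmx L \in unitmx ->
  forall x y, linv L x y = qlink F L a (x + y) - qlink F L a x - qlink F L a y.
Proof.
move=> LT LU x y; have e := linv_sym LT y x.
case: F; rewrite /qlink !linvDl !(linvDr LT) e; by field.
Qed.

Section Main.
Variables (F : qfamily) (n0 n1 : nat)
    (L0 : 'M[int]_n0) (a0 : 'rV[int]_n0) (L1 : 'M[int]_n1) (a1 : 'rV[int]_n1)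
    (theta : 'rV[int]_n0 -> 'rV[int]_n1).
Hypotheses (S0 : L0^T = L0) (S1 : L1^T = L1) (N0 : nondeg L0) (N1 : nondeg L1)
  (F0 : in_family F L0 a0) (F1 : in_family F L1 a1)
  (Th : qlf_isometry F L0 a0 L1 a1 theta).

Let U0 := nondeg_unit N0.
Let U1 := nondeg_unit N1.
Let thwd : forall x x', cok_eq L0 x x' -> cok_eq L1 (theta x) (theta x').
Proof. by case: Th. Qed.
Let thadd : forall x y, cok_eq L1 (theta (x + y)) (theta x + theta y).
Proof. by case: Th. Qed.
Let thsurj : forall y, exists x, cok_eq L1 (theta x) y.
Proof. by case: Th. Qed.
Let tha : cok_eq L1 (theta a0) a1.
Proof. by case: Th => _ _ _ _ []. Qed.
Let thq : forall x, eqmodZ (qlink F L1 a1 (theta x)) (qlink F L0 a0 x).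
Proof. by case: Th => _ _ _ _ []. Qed.

Local Notation H := (inH L1 theta).
Local Notation lam := (lamH L0 L1).
Local Notation j := (jmap L0 L1).

Lemma th0 : cok_eq L1 (theta 0) 0.
Proof.
have h := thadd 0 0; rewrite addr0 in h.
have := cok_add h (cok_refl L1 (- theta 0)); rewrite subrr -addrA subrr addr0.
by apply: cok_sym.
Qed.

Lemma thN x : cok_eq L1 (theta (- x)) (- theta x).
Proof.
have h := thadd x (- x); rewrite subrr in h.
have h2 := cok_trans (cok_sym h) th0.
have := cok_add h2 (cok_refl L1 (- theta x)).
by rewrite add0r addrC addrA addNr add0r.
Qed.

Lemma H_add h k : H h -> H k -> H (padd h k).
Proof. by move=> hh hk; apply: cok_trans (thadd _ _) (cok_add hh hk). Qed.
Lemma H_mn h k : H h -> H (h.1 *+ k, h.2 *+ k).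
Proof.
move=> hh; elim: k => [|k IH]; first by rewrite !mulr0n; apply: th0.
by rewrite !mulrS; apply: (H_add hh IH).
Qed.
Lemma H_diag x : H (x, theta x).
Proof. exact: cok_refl. Qed.
Lemma Hj v : H (j v).
Proof.
rewrite /inH /jmap /=; apply: cok_trans (thwd (cok_mul L0 v.1)) _.
apply: cok_trans th0 _; exists (v.2); by rewrite sub0r opprK.
Qed.

Lemma qlink_th x0 x1 : cok_eq L1 (theta x0) x1 ->
  isZ (qlink F L1 a1 x1 - qlink F L0 a0 x0).
Proof.
move=> h; have h1 := qlink_cok S1 U1 F1 (cok_sym h).
have := isZD h1 (thq x0); by rewrite addrA subrK.
Qed.

Lemma integral h k : H h -> H k -> isZ (lam h k).
Proof.
case: h => x0 x1; case: k => y0 y1; rewrite /inH /= => hx hy.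
have P0 := polar F a0 S0 U0 x0 y0.
have P1 := polar F a1 S1 U1 (theta x0) (theta y0).
have Z1 := qlink_th (thadd x0 y0).
have Z2 := qlink_th (H_diag x0).
have Z3 := qlink_th (H_diag y0).
have E1 := linv_cokl U1 (theta y0) hx.
have E2 := linv_cokr S1 U1 x1 hy.
have -> : lam (x0, x1) (y0, y1) =
  - (qlink F L1 a1 (theta x0 + theta y0) - qlink F L0 a0 (x0 + y0))
  + (qlink F L1 a1 (theta x0) - qlink F L0 a0 x0)
  + (qlink F L1 a1 (theta y0) - qlink F L0 a0 y0)
  + (linv L1 (theta x0) (theta y0) - linv L1 x1 (theta y0))
  + (linv L1 x1 (theta y0) - linv L1 x1 y1).
  by rewrite /lamH /= P0 P1; ring.
by apply: isZD => //; apply: isZD => //; apply: isZD => //; apply: isZD => //; apply: isZN.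
Qed.

Lemma lam_jr h v : lam h (j v) = (dot v.1 h.1 + dot v.2 h.2)%:~R.
Proof.
by rewrite /lamH /jmap /= (linvNr S1) !(linv_mulr _ _) // opprK intrD.
Qed.

Lemma lam_jj v w : lam (j v) (j w) = (bil L0 v.1 w.1 - bil L1 v.2 w.2)%:~R.
Proof.
by rewrite /lamH /jmap /= (linvNr S1) linvNl opprK !linv_mul2 // intrB.
Qed.

Lemma lam_sym h k : lam h k = lam k h.
Proof. by rewrite /lamH (linv_sym S0) (linv_sym S1). Qed.

Lemma j_add v w : j (padd v w) = padd (j v) (j w).
Proof. by rewrite /jmap /padd /= !mulmxDl opprD. Qed.


Lemma H_free : free_fg H.
Proof.
pose K (x : 'rV[int]_(n0 + n1)) := H (lsubmx x, rsubmx x).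
have K0 : K 0 by rewrite /K !linear0; apply: th0.
have KB x y : K x -> K y -> K (x - y).
  move=> hx hy; rewrite /K !linearB.
  have hy' : H (- lsubmx y, - rsubmx y) := cok_trans (thN _) (cok_opp hy).
  exact: (H_add hx hy').
have [m [B [hB hBi]]] := subgroup_basis K0 KB.
exists m, (lsubmx B), (rsubmx B) => h; split.
  move=> hh; have : K (row_mx h.1 h.2) by rewrite /K row_mxKl row_mxKr; case: h hh.
  move/hB => [u hu]; exists u; split.
    by rewrite !mulmx_lsub !mulmx_rsub -hu row_mxKl row_mxKr; case: h {hh hu}.
  move=> u' hu'; apply/eqP; rewrite -subr_eq0; apply/eqP; apply: hBi.
  rewrite mulmxBl -hu -{1}(hsubmxK B) mul_mx_row.
  by rewrite hu' /= subrr.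
move=> [u [-> _]]; rewrite !mulmx_lsub !mulmx_rsub.
by have := (proj2 (hB (u *m B))) (ex_intro _ u erefl).
Qed.

Lemma nonsing : nonsingular_on H lam.
Proof.
split.
  case=> x0 x1 hh h0.
  have e0 : x0 = 0.
    apply/rowP => i; have := h0 _ (Hj (delta_mx 0 i, 0)).
    rewrite lam_jr /= dot_delta /dot mul0mx mxE addr0 mxE => /eqP.
    by rewrite intr_eq0 => /eqP.
  have e1 : x1 = 0.
    apply/rowP => i; have := h0 _ (Hj (0, delta_mx 0 i)).
    rewrite lam_jr /= dot_delta /dot mul0mx mxE add0r mxE => /eqP.
    by rewrite intr_eq0 => /eqP.
  by rewrite e0 e1.
move=> f fadd.
pose g0 (x : 'rV[int]_n0) := f (j (x, 0)).
pose g1 (x : 'rV[int]_n1) := f (j (0, x)).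
have fjD v w : f (j v) + f (j w) = f (j (padd v w)).
  by rewrite j_add fadd //; apply: Hj.
have g0D x y : g0 (x + y) = g0 x + g0 y.
  by rewrite /g0 fjD /padd /= addr0.
have g1D x y : g1 (x + y) = g1 x + g1 y.
  by rewrite /g1 fjD /padd /= addr0.
pose y0 := \row_i g0 (delta_mx 0 i).
pose y1 := \row_i g1 (delta_mx 0 i).
have fj v : f (j v) = dot v.1 y0 + dot v.2 y1.
  rewrite -(additive_dot g0D) -(additive_dot g1D) /g0 /g1 fjD.
  by rewrite /padd /= addr0 add0r -surjective_pairing.
pose h := (y0, y1).
have lamhj v : lam h (j v) = (f (j v))%:~R by rewrite lam_jr fj.
pose r := \det L0 * \det L1.
have r0 : r != 0 by rewrite mulf_neq0 // det_neq0.
pose N := absz (r * r).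
have NE : N%:Z = r * r by rewrite gez0_abs // -expr2 sqr_ge0.
have N0' : N != 0%N by rewrite -lt0n absz_gt0 mulf_neq0.
have hk k : H k -> (f k)%:~R = lam h k.
  move=> hk.
  have fmn : f (k.1 *+ N, k.2 *+ N) = f k *+ N.
    have f0 : f (0, 0) = 0.
      apply: (addrI (f (0,0))); rewrite -fadd; try exact: th0.
      by rewrite /padd /= !addr0.
    elim: (N) => [|p IH]; first by rewrite !mulr0n.
    by rewrite !mulrS -IH -fadd //; exact: H_mn hk.
  have lmn : lam h (k.1 *+ N, k.2 *+ N) = lam h k *+ N.
    by rewrite /lamH /= !(linvMnr S0) (linvMnr S1) mulrnBl.
  pose v := ((\det L0 * \det L1 * \det L1) *: (k.1 *m \adj L0),
             - ((\det L1 * \det L0 * \det L0) *: (k.2 *m \adj L1))).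
  have jv : j v = (k.1 *+ N, k.2 *+ N).
    rewrite /jmap /v /= mulNmx opprK -!scalemxAl !adj_mul !scalerA.
    rewrite -!scaler_nat natz NE /r; congr (_, _); congr (_ *: _); ring.
  have e1 : lam h (k.1 *+ N, k.2 *+ N) = (f k)%:~R *+ N.
    by rewrite -jv lamhj jv fmn rmorphMn.
  rewrite lmn -(mulr_natr (lam h k)) -(mulr_natr ((f k)%:~R)) in e1.
  have nz : (N%:R : rat) != 0 by rewrite pnatr_eq0.
  by apply: (mulIf nz); rewrite e1.
exists h; split; last by [].
pose w := theta y0 - y1.
have hw z : isZ (linv L1 w z).
  have [x0 hx0] := thsurj z.
  have e1 := linv_cokr S1 U1 w hx0.
  have i1 := integral (H_diag y0) (H_diag x0).
  have i2 : isZ (lam h (x0, theta x0)) by rewrite -(hk _ (H_diag x0)); apply: isZ_int.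
  have -> : linv L1 w z = - (linv L1 w (theta x0) - linv L1 w z) + (lam h (x0, theta x0) - lam (y0, theta y0) (x0, theta x0)).
    rewrite /lamH /= /w !linvBl; ring.
  by apply: isZD; [apply: isZN | apply: isZB].
have [u hu] := img_of_int U1 hw.
by exists u.
Qed.

Lemma famH : fam_on F H lam (a0, a1).
Proof.
have QZ h : H h -> isZ (qlink F L1 a1 h.2 - qlink F L0 a0 h.1) by move=> hh; apply: qlink_th.
case EF: F; rewrite EF in QZ.
- move=> [x0 x1] hh; have [z hz] := QZ _ hh.
  exists (- z); rewrite intrM intrN -hz /lamH /qlink /= (linv_sym S0 a0) (linv_sym S1 a1).
  rewrite mulrN; by field.
- move=> [x0 x1] hh; have [z hz] := QZ _ hh.
  exists (- z); rewrite intrM intrN -hz /lamH /qlink /=.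
  rewrite mulrN; by field.
- have F0' := F0; have F1' := F1; rewrite EF in F0' F1'.
  case: F0' => _ ->; case: F1' => _ ->; split.
    move=> [x0 x1] hh; have [z hz] := QZ _ hh.
    exists (- z); rewrite intrM intrN -hz /lamH /qlink /=.
    rewrite mulrN; by field.
  by move=> h _; rewrite /lamH !linv0l subrr.
Qed.

End Main.

Unset Implicit Arguments.

Theorem lemma1p1 (F : qfamily) (n0 n1 : nat)
    (L0 : 'M[int]_n0) (a0 : 'rV[int]_n0) (L1 : 'M[int]_n1) (a1 : 'rV[int]_n1)
    (theta : 'rV[int]_n0 -> 'rV[int]_n1) :
  L0^T = L0 -> L1^T = L1 -> nondeg L0 -> nondeg L1 ->
  in_family F L0 a0 -> in_family F L1 a1 ->
  qlf_isometry F L0 a0 L1 a1 theta ->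
  let H := inH L1 theta in
  let lam := lamH L0 L1 in
  let j := jmap L0 L1 in
  [/\ (* 1 *) [/\ free_fg H, symmetric_on H lam, bilinear_on H lam,
                  integral_on H lam & nonsingular_on H lam],
      (* 2 *) [/\ (forall v, H (j v)),
                  (forall v w, j (padd v w) = padd (j v) (j w)),
                  (forall v w, j v = j w -> v = w) &
                  (forall v w, lam (j v) (j w) = (bil L0 v.1 w.1 - bil L1 v.2 w.2)%:~R)],
      (* 3 *) H (a0, a1),
      (* 4 *) fam_on F H lam (a0, a1) &
      (* 5 *) (forall v, lam (j v) (j v) + lam (a0, a1) (j v) =
                  ((bil L0 v.1 v.1 + app a0 v.1) + (- bil L1 v.2 v.2 + app a1 v.2))%:~R)].
Proof.
move=> S0 S1 N0 N1 F0 F1 Th H lam j.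
have th3 : H (a0, a1) by case: Th => _ _ _ _ [].
split.
- split.
  + exact: (H_free Th).
  + by move=> h k _ _; apply: lam_sym.
  + move=> h h' k _ _ _; rewrite /lam /lamH /padd /= !linvDl !(linvDr S0) !(linvDr S1).
    by split; ring.
  + move=> h k hh hk; exact: (integral S0 S1 N0 N1 F1 Th hh hk).
  + exact: (nonsing S0 S1 N0 N1 F1 Th).
- split.
  + exact: (Hj Th).
  + exact: j_add.
  + case=> [v0 v1] [w0 w1]; rewrite /j /jmap /= => [[e0 e1]].
    have : (v0 - w0) *m L0 = 0 by rewrite mulmxBl e0 subrr.
    move/N0 => /eqP; rewrite subr_eq0 => /eqP ->.
    have : (v1 - w1) *m L1 = 0 by rewrite mulmxBl (oppr_inj e1) subrr.
    by move/N1 => /eqP; rewrite subr_eq0 => /eqP ->.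
  + exact: (lam_jj S0 S1 N0 N1).
- exact: th3.
- exact: (famH S0 S1 N1 F0 F1 Th).
- move=> v; rewrite /lam (lam_jj S0 S1 N0 N1) (lam_jr S0 S1 N0 N1) -intrD /=.
  congr (_%:~R); rewrite /app /dot; ring.
Qed.
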